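(* In the model described in the context, there exist parameters $\rho,q$ with $1>\rho>q>0$, a distribution $(\pi^{(0,0)},\pi^{(0,1)},\pi^{(1,0)},\pi^{(1,1)})$ of $(\tilde y_0^+,\tilde y_0^-)$ with $\pi^{(1,0)}<1$, and two label-flip probabilities $\nu_1\neq\nu_2$ in $[0,\tfrac12)$ such that, for each $j\in\{1,2\}$ (with $\nu=\nu_j$), there exists $m\ge2$ with $\Pr(W_2)<\Pr(W_1)$, and the smallest $m_0(\nu_j)$ such that $\Pr(W_2)>\Pr(W_1)$ for all $m\ge m_0(\nu_j)$ satisfies $m_0(\nu_1)\neq m_0(\nu_2)$. (For instance $\rho=0.15$, $q=0.01$, $\pi^{(1,0)}=0.55^2$, $\pi^{(0,1)}=0.45^2$, $\pi^{(0,0)}=\pi^{(1,1)}=0.55\cdot0.45$, $\nu\in\{0.05,0.2\}$.)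
   Context: Model. Fix an integer $m\ge 2$, and reals $1>\rho>q>0$, $0\le\nu<\tfrac12$. A sample consists of ground-truth labels $y_0,y_1,\dots,y_m\in\{0,1\}$ and noisy labels $\tilde y_0,\dots,\tilde y_m\in\{0,1\}$. Given $y_0$, the labels $y_1,\dots,y_m$ are conditionally independent with $\Pr(y_i=1\mid y_0=1)=\rho$ and $\Pr(y_i=1\mid y_0=0)=q$ for $i\in\{1,\dots,m\}$. For $i\in\{1,\dots,m\}$, $\tilde y_i = 1-y_i$ with probability $\nu$ and $\tilde y_i=y_i$ otherwise, the flips being independent of each other and of everything else. We draw one positive sample (superscript $+$, with $y_0^+=1$) and one negative sample (superscript $-$, with $y_0^-=0$) independently. The pair $(\tilde y_0^+,\tilde y_0^-)\in\{0,1\}^2$ has an arbitrary distribution, independent of all $y_i^\pm,\tilde y_i^\pm$ with $i\ge1$; write $\pi^{(u,v)}:=\Pr(\tilde y_0^+=u,\tilde y_0^-=v)$. Fix $\delta>0$. For each sample set $\bar s_{0,i} := \max(\tilde y_0,\tilde y_i)+\delta\min(\tilde y_0,\tilde y_i)$ for $i=1,\dots,m$, and let $\bar r_1\ge \bar r_2$ be the largest and second largest elements of $\{\bar s_{0,1},\dots,\bar s_{0,m}\}$ (as a multiset). For $k\in\{1,2\}$, $\Pr(W_k) := \Pr(\bar r_k^+>\bar r_k^-) + \tfrac12\Pr(\bar r_k^+=\bar r_k^-)$. *)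

(* Defs.v *)
From HB Require Import structures.
From mathcomp Require Import all_boot all_order all_algebra.
Set Implicit Arguments. Unset Strict Implicit. Unset Printing Implicit Defensive.
Import Order.TTheory GRing.Theory Num.Theory.
Local Open Scope ring_scope.

Section Model.
Variable R : realFieldType.

Definition bprob (p : R) (b : bool) : R := if b then p else 1 - p.

(* Probability weight of one sample with ground-truth y_0 = y0, ground truths
   y_i = y i and flip indicators f i (i = 1..m, indexed by 'I_m):
   y_i ~ Bernoulli(rho) if y0 else Bernoulli(q), f_i ~ Bernoulli(nu),
   all independent. The noisy label is  ytilde_i = y i (+) f i. *)
Definition sample_weight (m : nat) (rho q nu : R) (y0 : bool)
    (y f : {ffun 'I_m -> bool}) : R :=
  \prod_(i < m) (bprob (if y0 then rho else q) (y i) * bprob nu (f i)).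

Definition sbar (delta : R) (a b : bool) : R :=
  Num.max (a%:R : R) (b%:R) + delta * Num.min (a%:R : R) (b%:R).

Definition kth_largest (k : nat) (s : seq R) : R :=
  nth 0 (sort (fun x y : R => y <= x) s) k.-1.

(* rbar_k of a sample with noisy ytilde_0 = u *)
Definition rbar (delta : R) (k m : nat) (u : bool) (y f : {ffun 'I_m -> bool}) : R :=
  kth_largest k [seq sbar delta u (y i (+) f i) | i <- enum 'I_m].

Definition win (x y : R) : R :=
  (if y < x then 1 else 0) + (if x == y then 2^-1 else 0).

(* pi^{(u,v)} = Pr(ytilde_0^+ = u, ytilde_0^- = v) *)
Definition pi4 (p00 p01 p10 p11 : R) (u v : bool) : R :=
  if u then (if v then p11 else p10) else (if v then p01 else p00).

(* Pr(W_k) = Pr(rbar_k^+ > rbar_k^-) + 1/2 Pr(rbar_k^+ = rbar_k^-) *)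
Definition PrW (m : nat) (rho q nu p00 p01 p10 p11 delta : R) (k : nat) : R :=
  \sum_(u : bool) \sum_(v : bool) pi4 p00 p01 p10 p11 u v *
   \sum_(yp : {ffun 'I_m -> bool}) \sum_(fp : {ffun 'I_m -> bool})
   \sum_(yn : {ffun 'I_m -> bool}) \sum_(fn : {ffun 'I_m -> bool})
     sample_weight rho q nu true yp fp * sample_weight rho q nu false yn fn *
     win (rbar delta k u yp fp) (rbar delta k v yn fn).

End Model.

Definition is_min_threshold (P : nat -> Prop) (m0 : nat) : Prop :=
  (forall m, (2 <= m)%N -> (m0 <= m)%N -> P m) /\
  (forall m1, (forall m, (2 <= m)%N -> (m1 <= m)%N -> P m) -> (m0 <= m1)%N).

(* Main.v *)
Require Import Defs.
From HB Require Import structures.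
From mathcomp Require Import all_boot all_order all_algebra.
From mathcomp Require Import zify ring lra.
Import Order.TTheory GRing.Theory Num.Theory.
Local Open Scope ring_scope.


Lemma sum2_prod {R : comNzRingType} (m : nat) (F : 'I_m -> bool -> bool -> R) :
  \sum_(y : {ffun 'I_m -> bool}) \sum_(f : {ffun 'I_m -> bool}) \prod_i F i (y i) (f i)
  = \prod_i \sum_(b : bool) \sum_(c : bool) F i b c.
Proof.
rewrite (bigA_distr_bigA (fun i b => \sum_(c : bool) F i b c)).
apply: eq_bigr => y _.
by rewrite (bigA_distr_bigA (fun i c => F i (y i) c)).
Qed.



Lemma sorted_nseq10 {R : realFieldType} (N M : nat) :
  sorted (fun x y : R => y <= x) (nseq N 1 ++ nseq M 0).
Proof.
have H0 : forall M, sorted (fun x y : R => y <= x) (nseq M 0).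
  by elim=> [|[|k] IH] //=; rewrite lexx.
elim: N => [|n IH]; first exact: H0.
case: n IH => [|n] IH /=.
  clear IH; by case: M => //= k; rewrite ler01 /=; apply: (H0 k.+1).
by rewrite lexx /=; exact: IH.
Qed.

Lemma perm_bool (bs : seq bool) :
  perm_eq bs (nseq (count id bs) true ++ nseq (size bs - count id bs) false).
Proof.
apply/permP => p.
rewrite count_cat !count_nseq.
elim: bs => [|b s IH] /=; first by rewrite subnn !muln0.
have hc : (count id s <= size s)%N by apply: count_size.
rewrite IH; case: b => /=; case: (p true); case: (p false) => /=; lia.
Qed.

Lemma sort_bool {R : realFieldType} (bs : seq bool) :
  sort (fun x y : R => y <= x) [seq ((nat_of_bool b)%:R : R) | b <- bs] =
  nseq (count id bs) 1 ++ nseq (size bs - count id bs) 0.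
Proof.
apply: (@sorted_eq R (fun x y : R => y <= x)).
- by move=> x y z hyx hzy; exact: le_trans hzy hyx.
- by move=> x y /andP[h1 h2]; apply/eqP; rewrite eq_le h1 h2.
- apply: sort_sorted => x y; exact: le_total.
- exact: sorted_nseq10.
- rewrite perm_sort.
  apply: perm_trans (perm_map (fun b : bool => ((nat_of_bool b)%:R : R)) (perm_bool bs)) _.
  by rewrite map_cat !map_nseq.
Qed.

Lemma kth_bool {R : realFieldType} (k : nat) (bs : seq bool) : (0 < k)%N ->
  kth_largest k [seq ((nat_of_bool b)%:R : R) | b <- bs] =
  (nat_of_bool (k <= count id bs)%N)%:R.
Proof.
move=> hk; rewrite /kth_largest sort_bool nth_cat size_nseq.
have hc : (count id bs <= size bs)%N by apply: count_size.
case: ifP => h.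
  by rewrite nth_nseq h; have -> : (k <= count id bs)%N by lia.
rewrite nth_nseq; have -> : (k <= count id bs)%N = false by lia.
by case: ifP.
Qed.

Definition cnt {m : nat} (y f : {ffun 'I_m -> bool}) : nat :=
  count id [seq y i (+) f i | i <- enum 'I_m].

Lemma rbar_false {R : realFieldType} (delta : R) k m (y f : {ffun 'I_m -> bool}) : (0 < k)%N ->
  rbar delta k false y f = (nat_of_bool (k <= cnt y f)%N)%:R.
Proof.
move=> hk; rewrite /rbar -kth_bool //; congr kth_largest.
rewrite -map_comp; apply: eq_map => i /=.
rewrite /sbar; case: (y i (+) f i) => /=.
  by rewrite /Num.max /Num.min ltr01 mulr0 addr0.
by rewrite /Num.max /Num.min ltxx mulr0 addr0.
Qed.

Lemma win_bool {R : realFieldType} (b1 b2 : bool) :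
  win ((nat_of_bool b1)%:R : R) (nat_of_bool b2)%:R = 2^-1 + ((nat_of_bool b1)%:R - (nat_of_bool b2)%:R) / 2.
Proof.
rewrite /win; case: b1; case: b2 => /=; rewrite ?ltxx ?eqxx ?ltr01 ?ltr10 ?oner_eq0 ?(eq_sym 0) ?oner_eq0 /=; lra.
Qed.


Lemma count_card m (t : 'I_m -> bool) : count id [seq t i | i <- enum 'I_m] = #|t|.
Proof.
rewrite count_map cardE -size_filter /enum_mem -filter_predI.
by congr size; apply: eq_filter => x; rewrite /= /in_mem /= andbT.
Qed.

Lemma prod_ind {R : realFieldType} m (c : 'I_m -> bool) :
  \prod_i ((nat_of_bool (c i))%:R : R) = (nat_of_bool [forall i, c i])%:R.
Proof.
case: (boolP [forall i, c i]) => [/forallP h|/forallPn [i hi]].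
  by rewrite big1 // => i _; rewrite h.
by rewrite (bigD1 i) //= (negbTE hi) mul0r.
Qed.

Definition onlyj {m} (t : 'I_m -> bool) (j : 'I_m) : bool :=
  [forall i, if i == j then t i else ~~ t i].

Lemma card_onlyj m (t : 'I_m -> bool) : #|onlyj t| = nat_of_bool (#|t| == 1)%N.
Proof.
case: (boolP (#|t| == 1)%N) => [h1|hn].
  move/card1P: (h1) => [x hx]; apply: (@eq_card1 _ x) => j.
  have hx' : forall y, t y = (y == x) by move=> y; exact: hx y.
  suff : onlyj t j = (j == x) by [].
  apply/forallP/eqP => [h|->].
    by have := h j; rewrite eqxx hx' => /eqP.
  move=> i; rewrite hx'; by case: (i == x).
apply/eqP; rewrite eqn0Ngt; case: (ltnP 0 _) => // /card_gt0P [j hj].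
exfalso; move/negP: hn; apply; apply/card1P; exists j => i; move: hj.
rewrite /in_mem /= /onlyj => /forallP /(_ i).
case: (i == j) => //=; by move/negbTE ->.
Qed.

Lemma cnt1 {R : realFieldType} m (t : 'I_m -> bool) :
  ((nat_of_bool (count id [seq t i | i <- enum 'I_m] == 1)%N)%:R : R) =
  \sum_j \prod_i (if i == j then (nat_of_bool (t i))%:R else (nat_of_bool (~~ t i))%:R).
Proof.
rewrite count_card.
have -> : \sum_j \prod_i (if i == j then (nat_of_bool (t i))%:R else (nat_of_bool (~~ t i))%:R)
   = \sum_j ((nat_of_bool (onlyj t j))%:R : R).
  apply: eq_bigr => j _; rewrite -prod_ind; apply: eq_bigr => i _; by case: (i == j).
have -> : \sum_j ((nat_of_bool (onlyj t j))%:R : R) = \sum_(j | onlyj t j) 1.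
  by rewrite [RHS]big_mkcond; apply: eq_bigr => j _; case: (onlyj t j).
by rewrite sumr_const card_onlyj.
Qed.


Lemma key {R : realFieldType} (T : finType) (wp wn A B : T -> T -> R) (c : R) :
  \sum_a \sum_b wp a b = 1 -> \sum_a \sum_b wn a b = 1 ->
  \sum_a \sum_b \sum_x \sum_y wp a b * wn x y * (c + A a b - B x y)
  = c + \sum_a \sum_b wp a b * A a b - \sum_x \sum_y wn x y * B x y.
Proof.
move=> hp hn.
have E1 : forall a b, \sum_x \sum_y wp a b * wn x y * (c + A a b - B x y)
   = wp a b * (c + A a b) - wp a b * (\sum_x \sum_y wn x y * B x y).
  move=> a b.
  have -> : \sum_x \sum_y wp a b * wn x y * (c + A a b - B x y)
     = \sum_x \sum_y (wp a b * (c + A a b) * wn x y - wp a b * (wn x y * B x y)).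
    by apply: eq_bigr => x _; apply: eq_bigr => y _; ring.
  rewrite (eq_bigr (fun x => wp a b * (c + A a b) * \sum_y wn x y - wp a b * \sum_y wn x y * B x y)); last first.
    by move=> x _; rewrite sumrB -!mulr_sumr.
  by rewrite sumrB -!mulr_sumr hn mulr1.
rewrite (eq_bigr (fun a => \sum_b (wp a b * (c + A a b) - wp a b * (\sum_x \sum_y wn x y * B x y)))); last first.
  by move=> a _; apply: eq_bigr => b _; exact: E1.
rewrite (eq_bigr (fun a => \sum_b wp a b * c + \sum_b wp a b * A a b - (\sum_b wp a b) * (\sum_x \sum_y wn x y * B x y))); last first.
  move=> a _; rewrite sumrB -big_split /= mulr_suml; apply: congr2 => //.
  by apply: eq_bigr => b _; ring.
rewrite !sumrB big_split /= -mulr_suml hp mul1r.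
rewrite (eq_bigr (fun a => (\sum_b wp a b) * c)); last by move=> a _; rewrite mulr_suml.
by rewrite -mulr_suml hp mul1r.
Qed.

Lemma exp_prod {R : realFieldType} m (rho q nu : R) y0 (g : 'I_m -> bool -> R) :
  \sum_(y : {ffun 'I_m -> bool}) \sum_(f : {ffun 'I_m -> bool})
     sample_weight rho q nu y0 y f * \prod_i g i (y i (+) f i)
  = \prod_i \sum_(b : bool) \sum_(c : bool)
      (bprob (if y0 then rho else q) b * bprob nu c * g i (b (+) c)).
Proof.
rewrite -sum2_prod; apply: eq_bigr => y _; apply: eq_bigr => f _.
by rewrite /sample_weight -big_split.
Qed.

Definition ap {R : realFieldType} (p nu : R) := p * (1 - nu) + (1 - p) * nu.

Lemma coord_t {R : realFieldType} (p nu : R) :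
  \sum_(b : bool) \sum_(c : bool) (bprob p b * bprob nu c * (nat_of_bool (b (+) c))%:R) = ap p nu.
Proof. rewrite !big_bool /bprob /ap /=; ring. Qed.

Lemma coord_f {R : realFieldType} (p nu : R) :
  \sum_(b : bool) \sum_(c : bool) (bprob p b * bprob nu c * (nat_of_bool (~~ (b (+) c)))%:R) = 1 - ap p nu.
Proof. rewrite !big_bool /bprob /ap /=; ring. Qed.

Lemma coord_1 {R : realFieldType} (p nu : R) :
  \sum_(b : bool) \sum_(c : bool) (bprob p b * bprob nu c * 1) = 1.
Proof. rewrite !big_bool /bprob /=; ring. Qed.

Lemma weight1 {R : realFieldType} m (rho q nu : R) y0 :
  \sum_(y : {ffun 'I_m -> bool}) \sum_(f : {ffun 'I_m -> bool})
     sample_weight rho q nu y0 y f = 1.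
Proof.
transitivity (\prod_(i < m) \sum_(b : bool) \sum_(c : bool)
      (bprob (if y0 then rho else q) b * bprob nu c * 1)); last first.
  by rewrite big1 // => i _; rewrite coord_1.
rewrite -(exp_prod _ _ _ _ _ (fun _ _ => 1)).
by apply: eq_bigr => y _; apply: eq_bigr => f _; rewrite big1 ?mulr1.
Qed.

Lemma exp_cnt1 {R : realFieldType} m (rho q nu : R) y0 :
  \sum_(y : {ffun 'I_m -> bool}) \sum_(f : {ffun 'I_m -> bool})
     sample_weight rho q nu y0 y f * (nat_of_bool (cnt y f == 1)%N)%:R
  = m%:R * ap (if y0 then rho else q) nu * (1 - ap (if y0 then rho else q) nu) ^+ m.-1.
Proof.
set a := ap _ nu.
under eq_bigr => y _ do under eq_bigr => f _ do rewrite /cnt (cnt1 _ (fun i => y i (+) f i)) mulr_sumr.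
under eq_bigr do rewrite exchange_big /=.
rewrite exchange_big /=.
transitivity (\sum_(j < m) (a * (1 - a) ^+ m.-1)); last first.
  by rewrite sumr_const card_ord -mulrA mulr_natl.
apply: eq_bigr => j _.
rewrite (exp_prod _ _ _ _ _ (fun i b => if i == j then (nat_of_bool b)%:R else (nat_of_bool (~~ b))%:R)).
rewrite (bigD1 j) //= eqxx coord_t.
rewrite (eq_bigr (fun _ => 1 - a)); last by move=> i /negbTE ->; rewrite coord_f.
by rewrite prodr_const cardC1 card_ord.
Qed.

Definition Ek {R : realFieldType} m (rho q nu : R) y0 k :=
  \sum_(y : {ffun 'I_m -> bool}) \sum_(f : {ffun 'I_m -> bool})
     sample_weight rho q nu y0 y f * ((nat_of_bool (k <= cnt y f)%N)%:R / 2).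

Lemma PrW_k {R : realFieldType} m (rho q nu delta : R) k : (0 < k)%N ->
  PrW m rho q nu 1 0 0 0 delta k = 2^-1 + Ek m rho q nu true k - Ek m rho q nu false k.
Proof.
move=> hk; rewrite /PrW !big_bool /pi4 /= !mul0r !add0r mul1r.
rewrite -(key _ _ _ _ _ _ (weight1 _ rho q nu true) (weight1 _ rho q nu false)).
apply: eq_bigr => a _; apply: eq_bigr => b _; apply: eq_bigr => x _; apply: eq_bigr => y _.
rewrite !rbar_false // win_bool; congr (_ * _); ring.
Qed.

Lemma Ediff {R : realFieldType} m (rho q nu : R) y0 :
  Ek m rho q nu y0 1 - Ek m rho q nu y0 2 =
  m%:R * ap (if y0 then rho else q) nu * (1 - ap (if y0 then rho else q) nu) ^+ m.-1 / 2.
Proof.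
rewrite -exp_cnt1 /Ek -sumrB mulr_suml; apply: eq_bigr => y _.
rewrite -sumrB mulr_suml; apply: eq_bigr => f _.
case: (cnt y f) => [|[|n]] /=; ring.
Qed.

Lemma PrW_diff {R : realFieldType} m (rho q nu delta : R) :
  PrW m rho q nu 1 0 0 0 delta 2 - PrW m rho q nu 1 0 0 0 delta 1 =
  (m%:R * ap q nu * (1 - ap q nu) ^+ m.-1 - m%:R * ap rho nu * (1 - ap rho nu) ^+ m.-1) / 2.
Proof.
rewrite !PrW_k //.
have h1 := Ediff m rho q nu true; have h2 := Ediff m rho q nu false; simpl in h1, h2.
rewrite mulrBl -h1 -h2; ring.
Qed.

Lemma Dform {R : realFieldType} (b0 b1 a0 a1 d n : nat) : (0 < d)%N ->
  ((n.+1)%:R * (b0%:R / d%:R) * (b1%:R / d%:R) ^+ n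
     - (n.+1)%:R * (a0%:R / d%:R) * (a1%:R / d%:R) ^+ n) / 2
  = (((b0 * b1 ^ n)%N)%:R - ((a0 * a1 ^ n)%N)%:R) * ((n.+1)%:R / ((d ^ n.+1)%N)%:R / 2 : R).
Proof.
move=> hd.
have hd0 : (d%:R : R) != 0 by rewrite pnatr_eq0 -lt0n.
rewrite !expr_div_n !natrM !natrX exprS; field.
by rewrite expf_neq0.

Qed.

Lemma Dsign {R : realFieldType} (x y d n : nat) : (0 < d)%N ->
  (0 < ((x%:R - y%:R) * ((n.+1)%:R / ((d ^ n.+1)%N)%:R / 2) : R) <-> (y < x)%N) /\
  (((x%:R - y%:R) * ((n.+1)%:R / ((d ^ n.+1)%N)%:R / 2) : R) < 0 <-> (x < y)%N).
Proof.
move=> hd.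
have hc : (0 : R) < (n.+1)%:R / ((d ^ n.+1)%N)%:R / 2.
  by rewrite !divr_gt0 // ltr0n expn_gt0 hd.
split.
  by rewrite pmulr_lgt0 // subr_gt0 ltr_nat.
by rewrite pmulr_llt0 // subr_lt0 ltr_nat.
Qed.

Lemma N1 n : (4 * 4 ^ n < 1 * 7 ^ n)%N <-> (3 <= n)%N.
Proof.
split.
  by case: n => [|[|[|n]]].
elim: n => [|n IH] // hn.
case: (ltngtP n 2) => [h|h|e]; last by subst n.
  by move: hn h; clear; lia.
have := IH h; rewrite !expnS; move: (4 ^ n)%N (7 ^ n)%N => x y; lia.
Qed.

Lemma N2 n : (8 * 8 ^ n < 5 * 11 ^ n)%N <-> (2 <= n)%N.
Proof.
split.
  by case: n => [|[|n]].
elim: n => [|n IH] // hn.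
case: (ltngtP n 1) => [h|h|e]; last by subst n.
  by move: hn h; clear; lia.
have := IH h; rewrite !expnS; move: (8 ^ n)%N (11 ^ n)%N => x y; lia.
Qed.

Lemma thr (P : nat -> Prop) m0 : (3 <= m0)%N ->
  (forall m, (2 <= m)%N -> (P m <-> (m0 <= m)%N)) -> is_min_threshold P m0.
Proof.
move=> h3 hP; split.
  by move=> m h2 hm; apply/(hP m h2).
move=> m1 hm1; case: (leqP m0 m1) => // hlt.
have : (m0 <= m0.-1)%N.
  apply/(hP _ _).1; first lia.
  apply: hm1; lia.
lia.
Qed.

Lemma Dnu1 {R : realFieldType} (delta : R) n :
  PrW n.+1 (2^-1) (8^-1) 0 1 0 0 0 delta 2 - PrW n.+1 (2^-1) (8^-1) 0 1 0 0 0 delta 1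
  = (((1 * 7 ^ n)%N)%:R - ((4 * 4 ^ n)%N)%:R) * ((n.+1)%:R / ((8 ^ n.+1)%N)%:R / 2 : R).
Proof.
rewrite PrW_diff -Dform //=.
have -> : ap (8^-1 : R) 0 = 1%:R / 8%:R by rewrite /ap; field.
have -> : 1 - (1%:R / 8%:R : R) = 7%:R / 8%:R by field.
have -> : ap (2^-1 : R) 0 = 4%:R / 8%:R by rewrite /ap; field.
have -> : 1 - (4%:R / 8%:R : R) = 4%:R / 8%:R by field.
by [].
Qed.

Lemma Dnu2 {R : realFieldType} (delta : R) n :
  PrW n.+1 (2^-1) (8^-1) (4^-1) 1 0 0 0 delta 2 - PrW n.+1 (2^-1) (8^-1) (4^-1) 1 0 0 0 delta 1
  = (((5 * 11 ^ n)%N)%:R - ((8 * 8 ^ n)%N)%:R) * ((n.+1)%:R / ((16 ^ n.+1)%N)%:R / 2 : R).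
Proof.
rewrite PrW_diff -Dform //=.
have -> : ap (8^-1 : R) (4^-1) = 5%:R / 16%:R by rewrite /ap; field.
have -> : 1 - (5%:R / 16%:R : R) = 11%:R / 16%:R by field.
have -> : ap (2^-1 : R) (4^-1) = 8%:R / 16%:R by rewrite /ap; field.
have -> : 1 - (8%:R / 16%:R : R) = 8%:R / 16%:R by field.
by [].
Qed.

Theorem theorem2 (R : realFieldType) (delta : R) (hdelta : 0 < delta) :
  exists (rho q p00 p01 p10 p11 nu1 nu2 : R),
    [/\ 0 < q, q < rho & rho < 1] /\
        [/\ 0 <= p00, 0 <= p01, 0 <= p10, 0 <= p11 & p00 + p01 + p10 + p11 = 1] /\
        p10 < 1 /\
        [/\ 0 <= nu1, nu1 < 2^-1, 0 <= nu2, nu2 < 2^-1 & nu1 != nu2] /\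
        (forall nu, nu = nu1 \/ nu = nu2 ->
           exists m : nat, (2 <= m)%N /\
             PrW m rho q nu p00 p01 p10 p11 delta 2
               < PrW m rho q nu p00 p01 p10 p11 delta 1) /\
        (exists m01 m02 : nat, m01 <> m02 /\
           is_min_threshold (fun m => PrW m rho q nu1 p00 p01 p10 p11 delta 1
                                      < PrW m rho q nu1 p00 p01 p10 p11 delta 2) m01 /\
           is_min_threshold (fun m => PrW m rho q nu2 p00 p01 p10 p11 delta 1
                                      < PrW m rho q nu2 p00 p01 p10 p11 delta 2) m02).
Proof.
exists (2^-1), (8^-1), 1, 0, 0, 0, 0, (4^-1).
split; first by split; lra.
split; first by split; rewrite ?lexx ?ler01 //; rewrite !addr0.
split; first exact: ltr01.
split.
  split; rewrite ?lexx //; try lra.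
split.
  move=> nu [->|->]; exists 2%N; split => //; rewrite -subr_lt0.
    by rewrite Dnu1; apply/(Dsign _ _ _ _ _).2.
  by rewrite Dnu2; apply/(Dsign _ _ _ _ _).2.
exists 4%N, 3%N; split => //; split; apply: thr => // -[|n] // _;
  rewrite -subr_gt0.
  by rewrite Dnu1 (Dsign _ _ _ _ _).1 //; exact: N1.
by rewrite Dnu2 (Dsign _ _ _ _ _).1 //; exact: N2.
Qed.
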